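(* Let $q$ be a prime power and let $\mathcal{H}_q$ be the Hermitian curve in $\mathrm{PG}(2,q^2)$. Let $\mathcal{B}$ be a $2$-blocking set of $\mathcal{H}_q$. Then in $\mathrm{PG}(2,q^2)$ there exist semiovals of size $k$ for every integer $k$ satisfying $|\mathcal{B}|\leq k\leq q^3+1$.
   Context: $\mathrm{PG}(2,q^2)$ is the Desarguesian projective plane over $\mathbb{F}_{q^2}$. The Hermitian curve $\mathcal{H}_q$ is the set of points of $\mathrm{PG}(2,q^2)$ satisfying $X_2X_0^q+X_2^qX_0+X_1^{q+1}=0$; it has $q^3+1$ points, there is a unique tangent line to $\mathcal{H}_q$ at each of its points, and every other line meets $\mathcal{H}_q$ in exactly $q+1$ points ($(q+1)$-secants). A pointset $\mathcal{D}\subset\mathcal{H}_q$ is a $2$-blocking set of $\mathcal{H}_q$ if every $(q+1)$-secant of $\mathcal{H}_q$ contains at least $2$ points of $\mathcal{D}$. A semioval is a non-empty pointset $\mathcal{S}$ such that for every $P\in\mathcal{S}$ there is a unique line $t_P$ with $\mathcal{S}\cap t_P=\{P\}$. *)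

(* Defs.v *)
From HB Require Import structures.
From mathcomp Require Import all_boot all_order all_algebra all_field.
Set Implicit Arguments. Unset Strict Implicit. Unset Printing Implicit Defensive.
Import GRing.Theory.
Local Open Scope ring_scope.

(* Points (and, dually, lines) of PG(2,F): nonzero vectors of F^3 normalized so
   that their first nonzero coordinate equals 1 (one canonical representative
   per 1-dimensional subspace). *)
Definition normalized (F : finFieldType) (v : 'rV[F]_3) : bool :=
  [exists i : 'I_3, (v ord0 i == 1) && [forall j : 'I_3, (j < i)%N ==> (v ord0 j == 0)]].

Definition pt (F : finFieldType) := {v : 'rV[F]_3 | normalized v}.

Definition X (F : finFieldType) (P : pt F) (i : nat) : F := (val P) ord0 (inord i).

Definition line (F : finFieldType) (l : pt F) : {set pt F} :=
  [set P : pt F | \sum_(i < 3) (val P) ord0 i * (val l) ord0 i == 0].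

Definition hermitian (F : finFieldType) (q : nat) : {set pt F} :=
  [set P : pt F | X P 2 * X P 0 ^+ q + X P 2 ^+ q * X P 0 + X P 1 ^+ q.+1 == 0].

Definition secant (F : finFieldType) (q : nat) (l : pt F) : bool :=
  #|line l :&: hermitian F q| == q.+1.

Definition two_blocking (F : finFieldType) (q : nat) (D : {set pt F}) : Prop :=
  D \subset hermitian F q /\
  forall l : pt F, secant q l -> (2 <= #|line l :&: D|)%N.

Definition semioval (F : finFieldType) (S : {set pt F}) : Prop :=
  S != set0 /\
  forall P, P \in S -> exists! t : pt F, line t :&: S = [set P].

Definition prime_power (q : nat) : Prop :=
  exists p k : nat, prime p /\ (0 < k)%N /\ q = (p ^ k)%N.

(* Main.v *)
Require Import Defs.
From mathcomp Require Import all_boot all_order all_algebra all_field.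
From mathcomp Require Import ring zify.
Set Implicit Arguments. Unset Strict Implicit. Unset Printing Implicit Defensive.
Import GRing.Theory.
Local Open Scope ring_scope.

Section Frob.
Variable F : finFieldType.
Variable q : nat.
Hypothesis hq : prime_power q.
Hypothesis hF : #|F| = (q ^ 2)%N.

Lemma q_gt1 : (1 < q)%N.
Proof. case: hq => p [k [pp [k0 ->]]]. case: k k0 => // k _.
rewrite expnS; have e := expn_gt0 p k; have p1 := prime_gt1 pp; rewrite (prime_gt0 pp) in e; nia. Qed.

Lemma frobD (x y : F) : (x + y) ^+ q = x ^+ q + y ^+ q.
Proof.
case: hq => p [k [pp [k0 Eq]]].
have cp : p \in [pchar F].
  apply: (@card_finPcharP _ p (k * 2)) => //. by rewrite hF Eq -expnM.
apply: exprDn_pchar. rewrite (eq_pnat _ (pcharf_eq cp)) Eq.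
by rewrite pnatX pnat_id.
Qed.

Lemma frobM (x y : F) : (x * y) ^+ q = x ^+ q * y ^+ q.
Proof. by rewrite exprMn. Qed.

Lemma frobK (x : F) : (x ^+ q) ^+ q = x.
Proof. have e : (q * q = #|F|)%N by rewrite hF expnS expn1.
by rewrite -exprM e expf_card. Qed.

Lemma frobN (x : F) : (- x) ^+ q = - x ^+ q.
Proof. by apply/eqP; rewrite -subr_eq0 opprK -frobD addNr expr0n; case: q q_gt1. Qed.

Lemma frob0 : (0 : F) ^+ q = 0.
Proof. by rewrite expr0n; case: q q_gt1. Qed.

Lemma frob_eq0 (x : F) : (x ^+ q == 0) = (x == 0).
Proof. by rewrite expf_eq0; case: q q_gt1. Qed.

Lemma roots_le (P : {poly F}) (A : {set F}) :
  P != 0 -> (forall x, x \in A -> root P x) -> (#|A| < size P)%N.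
Proof.
move=> P0 HA; rewrite cardE; apply: max_poly_roots => //; last exact: enum_uniq.
by apply/allP => x; rewrite mem_enum; apply: HA.
Qed.

Lemma sizeXqX (s : F) : size ('X^q + s *: 'X : {poly F}) = q.+1.
Proof.
rewrite size_addl ?size_polyXn //. apply: leq_ltn_trans (size_scale_leq _ _) _.
by rewrite size_polyX ltnS q_gt1.
Qed.

Lemma card_root_le (s : F) (A : {set F}) :
  (forall x, x \in A -> x ^+ q + s * x = 0) -> (#|A| <= q)%N.
Proof.
move=> HA; rewrite -ltnS -(sizeXqX s); apply: roots_le.
  by rewrite -size_poly_eq0 sizeXqX.
move=> x /HA; rewrite /root !hornerE => ->; by [].
Qed.

Definition fib (c : F) := [set z : F | z + z ^+ q == c].

Lemma fib_K (c : F) z : z \in fib c -> c ^+ q = c.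
Proof. by rewrite inE => /eqP <-; rewrite frobD frobK addrC. Qed.

Lemma fib_card (c : F) z : z \in fib c -> #|fib c| = #|fib 0%R|.
Proof.
move=> hz; have -> : fib c = (fun w => z + w) @: fib 0.
  apply/setP => y; apply/idP/imsetP.
    move=> hy; exists (y - z); last by rewrite addrC subrK.
    move: hy hz; rewrite !inE frobD frobN => /eqP h1 /eqP h2.
    by apply/eqP; rewrite addrACA h1 -opprD h2 subrr.
  move=> [w]; rewrite !inE => /eqP h ->; move: hz; rewrite inE frobD => /eqP h2.
  by apply/eqP; rewrite addrACA h addr0.
by rewrite card_imset //; apply: addrI.
Qed.

Lemma sum_fib : (\sum_(c : F) #|fib c|)%N = #|F|.
Proof.
have -> : #|F| = (\sum_(z : F) 1)%N by rewrite sum1_card.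
rewrite [RHS](partition_big (fun z => z + z ^+ q) xpredT) //=.
apply: eq_bigr => c _; rewrite sum1dep_card; apply: eq_card => z; by rewrite !inE.
Qed.

Lemma fib0_le : (#|fib 0%R| <= q)%N.
Proof. apply: (card_root_le (s := 1)) => x; rewrite inE mul1r => /eqP h; by rewrite addrC. Qed.

Lemma Kf_le : (#|[set c : F | c ^+ q == c]| <= q)%N.
Proof. apply: (card_root_le (s := -1)) => x; rewrite inE => /eqP ->; by rewrite mulN1r subrr. Qed.

Lemma sum_bound (c0 : F) :
  (\sum_(c : F) #|fib c| <= #|[set c : F | (c ^+ q == c) && (fib c != set0)]| * #|fib 0%R|)%N.
Proof.
rewrite -sum_nat_const [X in (_ <= X)%N]big_mkcond /=; apply: leq_sum => c _.
rewrite inE; case: (set_0Vmem (fib c)) => [->|[z hz]]; first by rewrite cards0; case: ifP.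
rewrite (fib_K hz) eqxx /=. have -> : fib c != set0 by apply/set0Pn; exists z.
by rewrite (fib_card hz).
Qed.

Lemma trace_count (c : F) : c ^+ q = c -> #|fib c| = q.
Proof.
move=> hc.
set S := [set c : F | (c ^+ q == c) && (fib c != set0)].
have hS : S \subset [set c : F | c ^+ q == c] by apply/subsetP => x; rewrite !inE => /andP [].
have b := sum_bound c; rewrite sum_fib hF -/S in b.
have l1 := Kf_le; have l2 := fib0_le; have l3 := subset_leq_card hS.
have fne : fib c != set0.
  apply/negP => /eqP e.
  have hS' : S \subset [set c : F | c ^+ q == c] :\ c.
    apply/subsetP => x; rewrite !inE => /andP [-> h]; rewrite andbT.
    by apply: contraNneq h => ->; rewrite e.
  have l4 := subset_leq_card hS'.
  have l5 := cardsD1 c [set c0 : F | c0 ^+ q == c0]; rewrite inE hc eqxx /= in l5.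
  have q1 := q_gt1. rewrite l5 in l1. have h1 : (#|S| < q)%N by apply: (leq_ltn_trans l4); rewrite -add1n; exact: l1. move: b h1 l2 q1; move: (#|S|) (#|fib 0%R|) => a m; nia.
case/set0Pn: fne => z hz; rewrite (fib_card hz).
have q1 := q_gt1. nia.
Qed.

Definition fr (x : F) := x ^+ q.
Lemma frD x y : fr (x + y) = fr x + fr y. Proof. exact: frobD. Qed.
Lemma frM x y : fr (x * y) = fr x * fr y. Proof. exact: frobM. Qed.
Lemma frN x : fr (- x) = - fr x. Proof. exact: frobN. Qed.
Lemma frK x : fr (fr x) = x. Proof. exact: frobK. Qed.
Lemma fr0 : fr 0 = 0. Proof. exact: frob0. Qed.
Lemma fr_eq0 x : (fr x == 0) = (x == 0). Proof. exact: frob_eq0. Qed.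
Lemma frB x y : fr (x - y) = fr x - fr y. Proof. by rewrite frD frN. Qed.
Lemma frV x : fr (x^-1) = (fr x)^-1. Proof. by rewrite /fr exprVn. Qed.
Lemma frMfr_eq0 x : (x * fr x == 0) = (x == 0).
Proof. by rewrite mulf_eq0 fr_eq0 orbb. Qed.

Definition cx (v : 'rV[F]_3) (i : nat) : F := v ord0 (inord i).
Definition mkv (a b c : F) : 'rV[F]_3 :=
  \row_(i < 3) (if (i : nat) == 0%N then a else if (i : nat) == 1%N then b else c).

Lemma mkv0 a b c : cx (mkv a b c) 0 = a. Proof. by rewrite /cx mxE inordK. Qed.
Lemma mkv1 a b c : cx (mkv a b c) 1 = b. Proof. by rewrite /cx mxE inordK. Qed.
Lemma mkv2 a b c : cx (mkv a b c) 2 = c. Proof. by rewrite /cx mxE inordK. Qed.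
Lemma cxD u w i : cx (u + w) i = cx u i + cx w i. Proof. by rewrite /cx mxE. Qed.
Lemma cxZ c u i : cx (c *: u) i = c * cx u i. Proof. by rewrite /cx mxE. Qed.
Lemma cxN u i : cx (- u) i = - cx u i. Proof. by rewrite /cx mxE. Qed.
Lemma cx0 i : cx 0 i = 0. Proof. by rewrite /cx mxE. Qed.

Lemma ord3 (i : 'I_3) : [\/ i = inord 0, i = inord 1 | i = inord 2].
Proof.
case: i => [[|[|[|//]]] Hi]; [apply: Or31|apply: Or32|apply: Or33];
  by apply: val_inj; rewrite /= inordK.
Qed.

Lemma vecP3 (u w : 'rV[F]_3) :
  cx u 0 = cx w 0 -> cx u 1 = cx w 1 -> cx u 2 = cx w 2 -> u = w.
Proof.
move=> h0 h1 h2; apply/rowP => i; by case: (ord3 i) => ->.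
Qed.

Lemma vecE (v : 'rV[F]_3) : v = mkv (cx v 0) (cx v 1) (cx v 2).
Proof. by apply: vecP3; rewrite ?mkv0 ?mkv1 ?mkv2. Qed.

Lemma vec_ne0 (v : 'rV[F]_3) : v != 0 -> [\/ cx v 0 != 0, cx v 1 != 0 | cx v 2 != 0].
Proof.
move=> hv; case: (eqVneq (cx v 0) 0) => h0; last by apply: Or31.
case: (eqVneq (cx v 1) 0) => h1; last by apply: Or32.
case: (eqVneq (cx v 2) 0) => h2; last by apply: Or33.
by move: hv; rewrite (@vecP3 v 0) ?eqxx ?cx0.
Qed.

Definition dot (u w : 'rV[F]_3) := cx u 0 * cx w 0 + cx u 1 * cx w 1 + cx u 2 * cx w 2.
Definition cross (u w : 'rV[F]_3) :=
  mkv (cx u 1 * cx w 2 - cx u 2 * cx w 1) (cx u 2 * cx w 0 - cx u 0 * cx w 2)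
      (cx u 0 * cx w 1 - cx u 1 * cx w 0).
Definition Qf (v : 'rV[F]_3) :=
  cx v 2 * fr (cx v 0) + fr (cx v 2) * cx v 0 + cx v 1 * fr (cx v 1).
Definition gam (r p : 'rV[F]_3) :=
  cx r 0 * fr (cx p 2) + cx r 1 * fr (cx p 1) + cx r 2 * fr (cx p 0).
Definition tv (p : 'rV[F]_3) := mkv (fr (cx p 2)) (fr (cx p 1)) (fr (cx p 0)).

Ltac comp := rewrite /dot /cross /Qf /gam /tv ?mkv0 ?mkv1 ?mkv2 ?cxD ?cxZ ?cxN ?cx0
   ?mkv0 ?mkv1 ?mkv2 ?cxD ?cxZ ?cxN ?cx0 ?frD ?frM ?frN ?frK ?fr0 ?frD ?frM ?frN ?frK ?fr0.
Ltac vcomp := apply: vecP3; comp; ring.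

Lemma dotZl c u w : dot (c *: u) w = c * dot u w. Proof. comp; ring. Qed.
Lemma dotDl u v w : dot (u + v) w = dot u w + dot v w. Proof. comp; ring. Qed.
Lemma dotC u w : dot u w = dot w u. Proof. comp; ring. Qed.
Lemma QfZ c v : Qf (c *: v) = c * fr c * Qf v. Proof. comp; ring. Qed.
Lemma Qexp r p l : Qf (r + l *: p) = Qf r + l * fr l * Qf p + l * fr (gam r p) + fr l * gam r p.
Proof. comp; ring. Qed.
Lemma gamD r p l : gam (r + l *: p) p = gam r p + l * Qf p. Proof. comp; ring. Qed.
Lemma Qf_fr v : fr (Qf v) = Qf v. Proof. comp; ring. Qed.
Lemma dot_tv r p : dot r (tv p) = gam r p. Proof. comp; ring. Qed.
Lemma cross_dotl a b : dot (cross a b) a = 0. Proof. comp; ring. Qed.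
Lemma cross_dotr a b : dot (cross a b) b = 0. Proof. comp; ring. Qed.
Lemma cross_crossl a b c : cross (cross a b) c = dot a c *: b - dot b c *: a. Proof. vcomp. Qed.
Lemma cross_crossr a b c : cross a (cross b c) = dot a c *: b - dot a b *: c. Proof. vcomp. Qed.
Lemma crossC a b : cross a b = - cross b a. Proof. vcomp. Qed.
Lemma cross_self a : cross a a = 0. Proof. vcomp. Qed.
Lemma crossDr a b c : cross a (b + c) = cross a b + cross a c. Proof. vcomp. Qed.
Lemma crossZr a b c : cross a (c *: b) = c *: cross a b. Proof. vcomp. Qed.
Lemma triple a b c s :
  dot a (cross b c) *: s = dot s (cross b c) *: a + dot s (cross c a) *: b + dot s (cross a b) *: c.
Proof. vcomp. Qed.

Ltac solve_e := apply/subr0_eq; match goal with H : _ - _ = 0 |- _ =>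
  first [ rewrite -H; ring | rewrite -oppr0 -H; ring ] end.

Lemma crossW0 a b : a != 0 -> cross a b = 0 -> exists c, b = c *: a.
Proof.
move=> ha hc.
have e0 : cx (cross a b) 0 = 0 by rewrite hc cx0.
have e1 : cx (cross a b) 1 = 0 by rewrite hc cx0.
have e2 : cx (cross a b) 2 = 0 by rewrite hc cx0.
move: e0 e1 e2; rewrite /cross mkv0 mkv1 mkv2.
set a0 := cx a 0; set a1 := cx a 1; set a2 := cx a 2.
set b0 := cx b 0; set b1 := cx b 1; set b2 := cx b 2 => e0 e1 e2.
case: (vec_ne0 ha) => h; rewrite -/a0 -/a1 -/a2 in h.
- exists (b0 / a0); apply: vecP3; rewrite cxZ -/a0 -/a1 -/a2 -/b0 -/b1 -/b2.
  + by rewrite divfK.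
  + apply: (mulfI h); rewrite mulrA mulrCA divff // mulr1.
    solve_e.
  + apply: (mulfI h); rewrite mulrA mulrCA divff // mulr1.
    solve_e.
- exists (b1 / a1); apply: vecP3; rewrite cxZ -/a0 -/a1 -/a2 -/b0 -/b1 -/b2.
  + apply: (mulfI h); rewrite mulrA mulrCA divff // mulr1.
    solve_e.
  + by rewrite divfK.
  + apply: (mulfI h); rewrite mulrA mulrCA divff // mulr1.
    solve_e.
- exists (b2 / a2); apply: vecP3; rewrite cxZ -/a0 -/a1 -/a2 -/b0 -/b1 -/b2.
  + apply: (mulfI h); rewrite mulrA mulrCA divff // mulr1.
    solve_e.
  + apply: (mulfI h); rewrite mulrA mulrCA divff // mulr1.
    solve_e.
  + by rewrite divfK.
Qed.

Lemma nondeg p r : Qf p = 0 -> p != 0 -> Qf r = 0 -> gam r p = 0 -> cross p r = 0.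
Proof.
move=> Qp pn0 Qr gr.
case: (eqVneq (cx p 0) 0) => p0.
  have p1 : cx p 1 = 0.
    apply/eqP; rewrite -frMfr_eq0; apply/eqP; rewrite -Qp /Qf p0 fr0; ring.
  have p2 : cx p 2 != 0 by case: (vec_ne0 pn0); rewrite ?p0 ?p1 ?eqxx.
  have r0 : cx r 0 = 0.
    have : cx r 0 * fr (cx p 2) == 0 by apply/eqP; rewrite -gr /gam p0 p1 fr0; ring.
    by rewrite mulf_eq0 fr_eq0 (negbTE p2) orbF => /eqP.
  have r1 : cx r 1 = 0.
    apply/eqP; rewrite -frMfr_eq0; apply/eqP; rewrite -Qr /Qf r0 fr0; ring.
  by apply: vecP3; rewrite /cross ?mkv0 ?mkv1 ?mkv2 ?cx0 ?p0 ?p1 ?r0 ?r1; ring.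
pose l := - (cx r 0 / cx p 0); pose r' := r + l *: p.
have Qr' : Qf r' = 0 by rewrite /r' Qexp Qp gr Qr fr0; ring.
have gr' : gam r' p = 0 by rewrite /r' gamD gr Qp; ring.
have r'0 : cx r' 0 = 0 by rewrite /r' cxD cxZ /l mulNr divfK // subrr.
have r'1 : cx r' 1 = 0.
  apply/eqP; rewrite -frMfr_eq0; apply/eqP; rewrite -Qr' /Qf r'0 fr0; ring.
have r'2 : cx r' 2 = 0.
  have : cx r' 2 * fr (cx p 0) == 0 by apply/eqP; rewrite -gr' /gam r'0 r'1; ring.
  by rewrite mulf_eq0 fr_eq0 (negbTE p0) orbF => /eqP.
have r'z : r' = 0 by apply: vecP3; rewrite cx0.
have -> : r = - l *: p by apply/eqP; rewrite scaleNr -subr_eq0 opprK -/r' r'z.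
by rewrite crossZr cross_self scaler0.
Qed.

Lemma normE (v : 'rV[F]_3) : normalized v =
  [|| cx v 0 == 1, (cx v 0 == 0) && (cx v 1 == 1) | [&& cx v 0 == 0, cx v 1 == 0 & cx v 2 == 1]].
Proof.
rewrite /normalized /cx; apply/existsP/idP.
  move=> [i /andP [h1 /forallP h2]]; case: (ord3 i) => ei; move: h1 h2; rewrite ei => -> h2.
  - by [].
  - have := h2 (inord 0); rewrite !inordK // => /= ->; by rewrite orbT.
  - have := h2 (inord 0); have := h2 (inord 1); rewrite !inordK // => /= -> /= ->.
    by rewrite !orbT.
case/or3P => [h|/andP[h0 h1]|/and3P[h0 h1 h2]].
- exists (inord 0); rewrite h /=; apply/forallP => j; by rewrite inordK.
- exists (inord 1); rewrite h1 /=; apply/forallP => j; rewrite inordK //.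
  apply/implyP => hj. have -> : j = inord 0 by apply: val_inj; rewrite /= inordK //; case: j hj => [[]].
  exact: h0.
- exists (inord 2); rewrite h2 /=; apply/forallP => j; rewrite inordK //.
  apply/implyP => hj. case: (ord3 j) => ej; rewrite ej ?h0 ?h1 //.
  by move: hj; rewrite ej inordK.
Qed.

Definition nz (v : 'rV[F]_3) := if cx v 0 != 0 then cx v 0 else if cx v 1 != 0 then cx v 1 else cx v 2.
Definition normv (v : 'rV[F]_3) := (nz v)^-1 *: v.

Lemma nz_ne0 v : v != 0 -> nz v != 0.
Proof. rewrite /nz => hv; case: (eqVneq (cx v 0) 0) => //= h0.
case: (eqVneq (cx v 1) 0) => //= h1.
by case: (vec_ne0 hv); rewrite ?h0 ?h1 ?eqxx. Qed.

Lemma norm_ok v : v != 0 -> normalized (normv v).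
Proof.
move=> hv; rewrite normE /normv !cxZ /nz.
case: (eqVneq (cx v 0) 0) => h0 /=; last by rewrite mulVf // eqxx.
rewrite h0 mulr0 eqxx /=.
case: (eqVneq (cx v 1) 0) => h1 /=; last by rewrite mulVf // eqxx orbT.
rewrite h1 mulr0 eqxx /= mulVf ?eqxx ?orbT //.
by case: (vec_ne0 hv); rewrite ?h0 ?h1 ?eqxx.
Qed.

Lemma mkv_ok : normalized (mkv 1 0 0).
Proof. by rewrite normE mkv0 eqxx. Qed.

Definition pt0 : pt F := exist _ (mkv 1 0 0) mkv_ok.
Definition npt (v : 'rV[F]_3) : pt F := odflt pt0 (insub (normv v)).

Lemma val_npt v : v != 0 -> val (npt v) = normv v.
Proof. by move=> hv; rewrite /npt insubT ?norm_ok. Qed.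

Lemma val_ne0 (P : pt F) : val P != 0.
Proof.
case: P => v /=; rewrite normE => h; apply/eqP => e; move: h; rewrite e !cx0.
by rewrite (eq_sym 0 1) oner_eq0 eqxx.
Qed.

Lemma pt_par (P S : pt F) c : val P = c *: val S -> P = S.
Proof.
case: P => u hu; case: S => w hw /= e; apply: val_inj => /=.
suff c1 : c = 1 by rewrite e c1 scale1r.
move: hu hw; rewrite !normE e !cxZ => hu.
case/or3P => [/eqP g|/andP[/eqP g0 /eqP g1]|/and3P[/eqP g0 /eqP g1 /eqP g2]];
  move: hu; rewrite ?g ?g0 ?g1 ?g2 ?mulr1 ?mulr0;
  (have [->|cn0] := eqVneq c 0; rewrite ?mul0r ?(eq_sym 0 1) ?oner_eq0 ?eqxx ?andbF ?orbF /=;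
   [ by [] | rewrite ?(negbTE cn0) ?andbF ?orbF /= => /eqP ]).
all: done. Qed.

Lemma npt_val (P : pt F) : npt (val P) = P.
Proof.
apply/esym; apply: (pt_par (c := nz (val P))); rewrite val_npt ?val_ne0 // /normv scalerA mulfV ?scale1r //.
exact: nz_ne0 (val_ne0 P).
Qed.

Lemma npt_eq v w : v != 0 -> w != 0 -> npt v = npt w -> exists2 k, k != 0 & v = k *: w.
Proof.
move=> hv hw e; have := congr1 val e; rewrite !val_npt // /normv => e2.
exists (nz v / nz w); first by rewrite mulf_neq0 ?invr_eq0 ?nz_ne0.
by rewrite -scalerA -e2 scalerA mulfV ?scale1r ?nz_ne0.
Qed.

Lemma npt_scale c v : c != 0 -> v != 0 -> npt (c *: v) = npt v.
Proof.
move=> hc hv; have hcv : c *: v != 0 by rewrite scaler_eq0 negb_or hc.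
apply: (pt_par (c := (nz (c *: v))^-1 * c * nz v)).
rewrite !val_npt // /normv !scalerA; congr (_ *: _).
by rewrite -!mulrA mulfV ?mulr1 ?nz_ne0.
Qed.

Lemma sum3 (g : 'I_3 -> F) : \sum_(i < 3) g i = g (inord 0) + g (inord 1) + g (inord 2).
Proof.
rewrite !big_ord_recl big_ord0 addr0 addrA; congr (g _ + g _ + g _); apply: val_inj; by rewrite /= ?inordK.
Qed.

Lemma line_mem (P l : pt F) : (P \in line l) = (dot (val P) (val l) == 0).
Proof. by rewrite inE sum3. Qed.

Lemma line_memv (P l : pt F) v : v != 0 -> val l = v -> (P \in line l) = (dot (val P) v == 0).
Proof. by move=> _ <-; rewrite line_mem. Qed.

Lemma herm_mem (P : pt F) : (P \in Defs.hermitian F q) = (Qf (val P) == 0).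
Proof. by rewrite inE /Qf /fr /Defs.X /cx exprS. Qed.

Lemma dotZr c u w : dot u (c *: w) = c * dot u w. Proof. comp; ring. Qed.

Lemma Qf_ne0 c : c != 0 -> (c * fr c != 0).
Proof. by move=> hc; rewrite mulf_neq0 // fr_eq0. Qed.

Definition tang (P : pt F) : pt F := npt (tv (val P)).

Lemma tv_ne0 p : p != 0 -> tv p != 0.
Proof.
move=> hp; apply/eqP => e.
have e0 : cx (tv p) 0 = 0 by rewrite e cx0.
have e1 : cx (tv p) 1 = 0 by rewrite e cx0.
have e2 : cx (tv p) 2 = 0 by rewrite e cx0.
move: e0 e1 e2; rewrite /tv mkv0 mkv1 mkv2 => /eqP e0 /eqP e1 /eqP e2.
by case: (vec_ne0 hp); rewrite -fr_eq0 ?e0 ?e1 ?e2.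
Qed.

Lemma gam_self p : gam p p = Qf p. Proof. comp; ring. Qed.
Lemma cross0r a : cross a 0 = 0. Proof. vcomp. Qed.
Lemma dot_cyc a b c : dot a (cross b c) = dot c (cross a b). Proof. comp; ring. Qed.

Lemma exists_e (v : 'rV[F]_3) : v != 0 -> exists e, dot e v != 0.
Proof.
move=> hv; case: (vec_ne0 hv) => h.
- by exists (mkv 1 0 0); rewrite /dot mkv0 mkv1 mkv2 !mul0r mul1r !addr0.
- by exists (mkv 0 1 0); rewrite /dot mkv0 mkv1 mkv2 !mul0r mul1r add0r addr0.
- by exists (mkv 0 0 1); rewrite /dot mkv0 mkv1 mkv2 !mul0r mul1r !add0r.
Qed.

Lemma val_tang P : val (tang P) = (nz (tv (val P)))^-1 *: tv (val P).
Proof. by rewrite /tang val_npt // tv_ne0 // val_ne0. Qed.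

Lemma on_tang P : P \in Defs.hermitian F q -> P \in line (tang P).
Proof.
rewrite herm_mem line_mem val_tang dotZr dot_tv gam_self => /eqP ->; by rewrite mulr0.
Qed.

Lemma tang_only P : P \in Defs.hermitian F q -> line (tang P) :&: Defs.hermitian F q = [set P].
Proof.
move=> hP; apply/setP => S; rewrite in_setI in_set1; apply/andP/eqP; last first.
  by move=> ->; split; [apply: on_tang|].
rewrite line_mem herm_mem val_tang dotZr dot_tv => -[h1 /eqP h2].
have hz : gam (val S) (val P) = 0.
  move: h1; rewrite mulf_eq0 invr_eq0 (negbTE (nz_ne0 (tv_ne0 (val_ne0 P)))) /=.
  by move/eqP.
have := nondeg (eqP (etrans (esym (herm_mem P)) hP)) (val_ne0 P) h2 hz.
case/(crossW0 (val_ne0 P)) => c hc.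
exact: pt_par hc.
Qed.

Lemma line_count (P l : pt F) : P \in Defs.hermitian F q -> P \in line l -> l != tang P ->
  #|line l :&: Defs.hermitian F q| = q.+1.
Proof.
move=> hP hPl hl.
set p := val P; set L := val l.
have pn0 : p != 0 := val_ne0 P.
have Ln0 : L != 0 := val_ne0 l.
have Qp : Qf p = 0 by apply/eqP; rewrite -herm_mem.
have pL : dot p L = 0 by apply/eqP; rewrite -line_mem.
have [e he] := exists_e pn0.
pose r := cross L e.
have rL : dot r L = 0 by rewrite cross_dotl.
have hn : cross p r = dot e p *: L.
  by rewrite /r cross_crossr pL scale0r subr0 dotC.
have nn0 : cross p r != 0 by rewrite hn scaler_eq0 negb_or he.
have gn0 : gam r p != 0.
  apply/negP => /eqP g0; move/negP: hl; apply.
  have ct : cross (tv p) (cross p r) = 0.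
    by rewrite cross_crossr dotC dot_tv g0 dotC dot_tv gam_self Qp !scale0r subrr.
  have cL : cross L (tv p) = 0.
    by move/eqP: ct; rewrite hn crossZr scaler_eq0 (negbTE he) /= crossC oppr_eq0 => /eqP.
  have [k hk] := crossW0 Ln0 cL.
  have kn0 : k != 0.
    by apply: contra_neq (tv_ne0 pn0) => k0; rewrite hk k0 scale0r.
  by apply/eqP; rewrite /tang hk npt_scale // npt_val.
have vn0 : forall lam, r + lam *: p != 0.
  move=> lam; apply/eqP => e0; move/eqP: nn0; apply.
  have : cross p (r + lam *: p) = 0 by rewrite e0 cross0r.
  by rewrite crossDr crossZr cross_self scaler0 addr0.
pose g lam := npt (r + lam *: p).
pose Lam := [set lam | Qf (r + lam *: p) == 0].
have ginj : injective g.
  move=> l1 l2 /npt_eq [] // k kn0 ek.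
  have : cross p (r + l1 *: p) = cross p (k *: (r + l2 *: p)) by rewrite -ek.
  rewrite crossZr !crossDr !crossZr cross_self !scaler0 !addr0 => ek2.
  have k1 : k = 1.
    apply/eqP; rewrite -subr_eq0; apply/eqP.
    have : (k - 1) *: cross p r = 0 by rewrite scalerBl scale1r -ek2 subrr.
    by move/eqP; rewrite scaler_eq0 (negbTE nn0) orbF => /eqP.
  move: ek; rewrite k1 scale1r => /addrI /eqP; rewrite -subr_eq0 -scalerBl scaler_eq0 (negbTE pn0) orbF.
  by rewrite subr_eq0 => /eqP.
have Pn : P \notin g @: Lam.
  apply/imsetP => -[lam _ e0].
  have := congr1 val e0; rewrite val_npt // /normv -/p => ep.
  move/eqP: nn0; apply.
  have : cross p p = cross p ((nz (r + lam *: p))^-1 *: (r + lam *: p)) by rewrite -ep.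
  rewrite cross_self crossZr crossDr crossZr cross_self scaler0 addr0 => /esym /eqP.
  by rewrite scaler_eq0 invr_eq0 (negbTE (nz_ne0 (vn0 lam))) /= => /eqP.
have hLam : #|Lam| = q.
  have e0 : Lam = (fun mu => mu / fr (gam r p)) @: fib (- Qf r).
    apply/setP => lam; apply/idP/imsetP.
    - rewrite inE Qexp Qp mulr0 addr0 => /eqP h.
      exists (lam * fr (gam r p)); last by rewrite mulfK // fr_eq0.
      rewrite inE; change (lam * fr (gam r p) + fr (lam * fr (gam r p)) == - Qf r).
      apply/eqP; apply/subr0_eq; rewrite opprK -h frM frK; ring.
    - move=> [mu]; rewrite inE => /eqP hmu ->.
      rewrite inE Qexp Qp mulr0 addr0 frM frV frK divfK ?fr_eq0 //.
      apply/eqP; rewrite divfK //; have -> : Qf r = - (mu + fr mu) by rewrite /fr hmu opprK.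
      ring.
  rewrite e0 card_imset; last by apply: mulIf; rewrite invr_eq0 fr_eq0.
  apply: trace_count; change (fr (- Qf r) = - Qf r); by rewrite frN Qf_fr.
have eS : line l :&: Defs.hermitian F q = P |: (g @: Lam).
  apply/setP => S; rewrite in_setU1 in_setI; apply/andP/idP; last first.
    case/orP => [/eqP ->|/imsetP [lam hlam ->]]; first by split.
    rewrite line_mem herm_mem val_npt // /normv dotZl dotDl dotZl rL pL QfZ.
    move: hlam; rewrite inE => /eqP ->; by rewrite !mulr0 !addr0 !mulr0 eqxx.
  case=> hSl hSH; case: (eqVneq S P) => [->|SP]; first by [].
  rewrite /=; set s := val S.
  have hsL : dot s L = 0 by apply/eqP; rewrite -line_mem.
  have hsQ : Qf s = 0 by apply/eqP; rewrite -herm_mem.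
  have [e' he'] := exists_e Ln0.
  have tri := triple p r e' s.
  have sn : dot s (cross p r) = 0 by rewrite hn dotZr hsL mulr0.
  set D := dot p (cross r e') in tri.
  have Dn0 : D != 0 by rewrite /D dot_cyc hn dotZr mulf_neq0.
  set A := dot s (cross r e') in tri; set B := dot s (cross e' p) in tri.
  have hs : s = (A / D) *: p + (B / D) *: r.
    apply: (scalerI Dn0); rewrite tri sn scale0r addr0 scalerDr !scalerA !(mulrC D) !divfK //.
  case: (eqVneq B 0) => B0.
    move: SP; rewrite (@pt_par S P (A / D)) ?eqxx //.
    by rewrite -/s hs B0 mul0r scale0r addr0.
  have hs2 : s = (B / D) *: (r + (A / B) *: p).
    rewrite hs scalerDr scalerA addrC; congr (_ + _); congr (_ *: _); field.
    by apply/andP; split.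
  have BD : B / D != 0 by rewrite mulf_neq0 // invr_eq0.
  apply/imsetP; exists (A / B).
    rewrite inE; move: hsQ; rewrite hs2 QfZ => /eqP; rewrite mulf_eq0 (negbTE (Qf_ne0 BD)) /=.
    by [].
  by rewrite /g -(npt_scale BD) // -hs2 npt_val.
by rewrite eS cardsU1 Pn card_imset // hLam.
Qed.

Lemma fr1 : fr 1 = 1. Proof. by rewrite /fr expr1n. Qed.

Lemma herm_card : (q ^ 3 + 1 <= #|Defs.hermitian F q|)%N.
Proof.
pose cond (y z : F) := z + fr z + y * fr y == 0.
pose Aff := [set u : F * F | cond u.1 u.2].
have hA : #|Aff| = (q ^ 3)%N.
  rewrite -sum1dep_card.
  rewrite (eq_bigl (fun u : F * F => true && cond u.1 u.2)) //.
  rewrite -(pair_big_dep xpredT cond (fun _ _ => 1%N)) /=.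
  rewrite (eq_bigr (fun _ => q)); last first.
    move=> y _; rewrite sum1dep_card -(trace_count (c := - (y * fr y))).
      by apply: eq_card => z; rewrite !inE /cond addr_eq0.
    change (fr (- (y * fr y)) = - (y * fr y)); by rewrite frN frM frK mulrC.
  by rewrite sum_nat_const hF -expnSr.
pose h (u : F * F) := npt (mkv 1 u.1 u.2).
have mk_ne0 : forall a b c : F, a != 0 -> mkv a b c != 0.
  by move=> a b c ha; apply/eqP => e; move: ha; rewrite -(mkv0 a b c) e cx0 eqxx.
have hinj : injective h.
  move=> [y z] [y' z'] /npt_eq [] //; try by apply: mk_ne0; rewrite oner_eq0.
  move=> k kn0 e /=.
  have k1 : k = 1 by have := congr1 (cx^~ 0) e; rewrite cxZ !mkv0 mulr1 => ->.
  have := congr1 (cx^~ 1) e; have := congr1 (cx^~ 2) e.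
  by rewrite !cxZ k1 !mul1r !mkv1 !mkv2 => /= -> ->.
pose Pinf := npt (mkv 0 0 1).
have Pn : Pinf \notin h @: Aff.
  apply/imsetP => -[u _ /npt_eq []].
  - apply/eqP => e; move: (oner_neq0 F); rewrite -(mkv2 0 0 1) e cx0 eqxx //.
  - by apply: mk_ne0; rewrite oner_eq0.
  move=> k kn0 e; have := congr1 (cx^~ 0) e; rewrite cxZ !mkv0 mulr1 => k0.
  by move: kn0; rewrite -k0 eqxx.
have sub : Pinf |: h @: Aff \subset Defs.hermitian F q.
  apply/subsetP => S; rewrite in_setU1 => /orP [/eqP ->|/imsetP [u hu ->]].
  - rewrite herm_mem val_npt /normv ?QfZ.
      by rewrite /Qf mkv0 mkv1 mkv2 fr0 ?mulr0 ?mul0r ?addr0 ?mulr0 ?mul0r ?addr0.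
    apply/eqP => e; move: (oner_neq0 F); rewrite -(mkv2 0 0 1) e cx0 eqxx //.
  - rewrite herm_mem val_npt /normv ?QfZ; last by apply: mk_ne0; rewrite oner_eq0.
    move: hu; rewrite inE /cond /Qf mkv0 mkv1 mkv2 fr1 !mulr1 => /eqP ->.
    by rewrite mulr0.
have := subset_leq_card sub; rewrite cardsU1 Pn card_imset // hA.
by rewrite addnC.
Qed.

Lemma herm_npt v : v != 0 -> (npt v \in Defs.hermitian F q) = (Qf v == 0).
Proof.
move=> hv; rewrite herm_mem val_npt // /normv QfZ mulf_eq0.
by rewrite (negbTE (Qf_ne0 _)) // invr_eq0 nz_ne0.
Qed.

Lemma line_npt v w : v != 0 -> w != 0 -> (npt v \in line (npt w)) = (dot v w == 0).
Proof.
move=> hv hw; rewrite line_mem !val_npt // /normv dotZl dotZr !mulf_eq0 !invr_eq0.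
by rewrite !(negbTE (nz_ne0 _)).
Qed.

Lemma mk_ne0 (a b c : F) : [|| a != 0, b != 0 | c != 0] -> mkv a b c != 0.
Proof.
case/or3P => h; apply/eqP => e; move: h.
- by rewrite -(mkv0 a b c) e cx0 eqxx.
- by rewrite -(mkv1 a b c) e cx0 eqxx.
- by rewrite -(mkv2 a b c) e cx0 eqxx.
Qed.

Lemma two_le_B (B : {set pt F}) : two_blocking q B -> (2 <= #|B|)%N.
Proof.
case=> hBH hB.
have v1 : mkv 0 0 1 != 0 by apply: mk_ne0; rewrite oner_eq0 !orbT.
have v2 : mkv 0 1 0 != 0 by apply: mk_ne0; rewrite oner_eq0 orbT.
pose P := npt (mkv 0 0 1); pose l := npt (mkv 0 1 0).
have hP : P \in Defs.hermitian F q.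
  by rewrite herm_npt // /Qf mkv0 mkv1 mkv2 fr0 ?mulr0 ?mul0r ?addr0 ?mulr0 ?mul0r ?addr0 ?eqxx.
have hPl : P \in line l.
  by rewrite line_npt // /dot !mkv0 !mkv1 !mkv2 !mul0r mulr0 !addr0 eqxx.
have hl : l != tang P.
  apply/eqP; rewrite /tang val_npt // /normv.
  have tn : tv (mkv 0 0 1) != 0 by apply: tv_ne0.
  have nn : (nz (mkv 0 0 1))^-1 != 0 by rewrite invr_eq0 nz_ne0.
  have tvZ : tv ((nz (mkv 0 0 1))^-1 *: mkv 0 0 1) = fr (nz (mkv 0 0 1))^-1 *: tv (mkv 0 0 1).
    by vcomp.
  rewrite tvZ npt_scale ?fr_eq0 // => /npt_eq [] // k _ /(congr1 (cx^~ 1)).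
  rewrite cxZ /tv !mkv1 fr0 mulr0 => /eqP; by rewrite oner_eq0.
have := hB l; rewrite /secant (line_count hP hPl hl) eqxx => /(_ isT) h.
apply: leq_trans h _; apply: subset_leq_card; exact: subsetIr.
Qed.

Lemma interp (T : finType) (B H : {set T}) n : B \subset H -> (n + #|B| <= #|H|)%N ->
  exists D : {set T}, [/\ B \subset D, D \subset H & #|D| = (n + #|B|)%N].
Proof.
move=> BH; elim: n => [|n IH] h; first by exists B.
have [D [BD DH cD]] := IH (ltnW h).
have : D \proper H by rewrite properEcard DH cD (leq_trans _ h).
case/properP => _ [x xH xD]; exists (x |: D); split.
- exact: subset_trans BD (subsetUr _ _).
- by rewrite subUset sub1set xH.
- by rewrite cardsU1 xD cD.
Qed.

Lemma main_sec (B : {set pt F}) (hB : two_blocking q B) :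
  forall k : nat, (#|B| <= k <= q ^ 3 + 1)%N ->
    exists S : {set pt F}, semioval S /\ #|S| = k.
Proof.
move=> k /andP [k1 k2].
have hB2 := two_le_B hB; case: hB => hBH hBl.
have [D [BD DH cD]] := interp (n := (k - #|B|)%N) hBH
   (leq_trans (leq_trans (eq_leq (subnK k1)) k2) herm_card).
rewrite subnK // in cD.
exists D; split => //; split.
  apply/set0Pn; apply/card_gt0P; rewrite cD; apply: leq_trans k1; exact: leq_trans hB2.
move=> P hPD; have hPH : P \in Defs.hermitian F q by apply: (subsetP DH).
have tD : line (tang P) :&: D = [set P].
  apply/setP => S; rewrite in_setI in_set1; apply/andP/eqP; last by move=> ->; split => //; apply: on_tang.
  case=> h1 h2; apply/set1P; rewrite -(tang_only hPH) in_setI h1 /=; exact: (subsetP DH).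
exists (tang P); split => // t ht.
have hPt : P \in line t by have := set11 P; rewrite -ht in_setI => /andP [].
apply/eqP; rewrite eq_sym; apply/negP => /negP hne.
have := hBl t; rewrite /secant (line_count hPH hPt hne) eqxx => /(_ isT) h.
have : (#|line t :&: B| <= #|line t :&: D|)%N by apply: subset_leq_card; apply: setIS.
by rewrite ht cards1 => /(leq_trans h).
Qed.
End Frob.

Theorem mainTheorem2 (F : finFieldType) (q : nat)
  (hq : prime_power q) (hF : #|F| = (q ^ 2)%N)
  (B : {set pt F}) (hB : two_blocking q B) :
  forall k : nat, (#|B| <= k <= q ^ 3 + 1)%N ->
    exists S : {set pt F}, semioval S /\ #|S| = k.
Proof. exact: main_sec. Qed.
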